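(* Let $1<p<\infty$, let $q$ be defined by $\frac1p+\frac1q=1$, and let $n,m\ge 0$ be integers. If $n\equiv m\pmod 2$, then $$\binom{n+m}{\frac{n+m}{2}} \le \Big(\sum_{i=0}^{m}\binom{m}{i}^p\Big)^{1/p}\Big(\sum_{j=0}^{n}\binom{n}{j}^q\Big)^{1/q}.$$ If $n-m\equiv 1\pmod 2$, then $$\frac12\binom{n+m+1}{\frac{n+m+1}{2}} \le \Big(\sum_{i=0}^{m}\binom{m}{i}^p\Big)^{1/p}\Big(\sum_{j=0}^{n}\binom{n}{j}^q\Big)^{1/q}.$$
   Context: Binomial coefficients $\binom{n}{i}$ for integers $0\le i\le n$ have their usual meaning. *)

(* Defs.v *)
From Stdlib Require Import Reals Lra Lia.
Open Scope R_scope.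

(* l^r norm of the binomial row: (sum_{i=0}^m C(m,i)^r)^(1/r).
   All binomials C m i (0<=i<=m) are positive, so Rpower is the usual power. *)
Definition binom_norm (r : R) (m : nat) : R :=
  Rpower (sum_f_R0 (fun i => Rpower (C m i) r) m) (/ r).

(* Main.v *)
Require Import Defs.
From Stdlib Require Import Reals Lra Lia.
Open Scope R_scope.

Fixpoint bin (n k : nat) : nat :=
  match n, k with
  | O, O => 1%nat
  | O, S _ => 0%nat
  | S n', O => 1%nat
  | S n', S k' => (bin n' k' + bin n' (S k'))%nat
  end.

Lemma bin_big n : forall k, (n < k)%nat -> bin n k = 0%nat.
Proof.
  induction n; intros [|k] H; simpl; try lia.
  rewrite !IHn; lia.
Qed.

Lemma bin_n0 n : bin n 0 = 1%nat.
Proof. destruct n; reflexivity. Qed.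

Lemma C_n0 n : C n 0 = 1.
Proof. unfold C. rewrite Nat.sub_0_r. simpl. field. apply INR_fact_neq_0. Qed.

Lemma C_nn n : C n n = 1.
Proof. unfold C. rewrite Nat.sub_diag. simpl. field. apply INR_fact_neq_0. Qed.

Lemma bin_C n : forall k, (k <= n)%nat -> INR (bin n k) = C n k.
Proof.
  induction n; intros [|k] H.
  - simpl. rewrite C_n0. reflexivity.
  - lia.
  - simpl. rewrite C_n0. reflexivity.
  - simpl bin. rewrite plus_INR.
    destruct (Nat.eq_dec k n) as [->|Hk].
    + rewrite (bin_big n (S n)) by lia. rewrite IHn by lia. rewrite !C_nn. simpl; lra.
    + rewrite !IHn by lia. apply pascal. lia.
Qed.

Lemma sum_shift (f : nat -> R) N :
  sum_f_R0 f (S N) = f O + sum_f_R0 (fun i => f (S i)) N.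
Proof.
  induction N.
  - simpl. ring.
  - change (sum_f_R0 f (S (S N))) with (sum_f_R0 f (S N) + f (S (S N))).
    rewrite IHN. simpl. ring.
Qed.

Lemma vander n m : forall j,
  sum_f_R0 (fun i => INR (bin m i) * INR (bin n (i + j))) m
  = INR (bin (m + n) (m + j)).
Proof.
  induction m; intros j.
  - simpl. ring.
  - rewrite sum_shift.
    simpl bin at 1.
    rewrite (sum_eq _ (fun i => INR (bin m i) * INR (bin n (i + S j))
                        + INR (bin m (S i)) * INR (bin n (S i + j)))).
    2:{ intros i _. simpl bin. rewrite plus_INR.
        replace (i + S j)%nat with (S (i + j)) by lia. simpl. ring. }
    rewrite sum_plus. rewrite IHm.
    assert (Hs := sum_shift (fun i => INR (bin m i) * INR (bin n (i + j))) m).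
    simpl in Hs. rewrite bin_big in Hs by lia. rewrite IHm in Hs.
    rewrite bin_n0 in Hs. simpl in Hs.
    replace (S m + n)%nat with (S (m + n)) by lia.
    replace (S m + j)%nat with (S (m + j)) by lia.
    replace (m + S j)%nat with (S (m + j)) by lia.
    simpl bin. rewrite plus_INR. simpl. simpl in Hs. lra.
Qed.

Definition pw (x r : R) : R := if Rlt_dec 0 x then Rpower x r else 0.

Lemma pw_ge0 x r : 0 <= pw x r.
Proof. unfold pw. destruct Rlt_dec. left; apply exp_pos. lra. Qed.

Lemma pw_le x r : pw x r <= Rpower x r.
Proof. unfold pw. destruct Rlt_dec. lra. left; apply exp_pos. Qed.

Lemma exp_convex t s x y : 0 <= t -> 0 <= s -> t + s = 1 ->
  exp (t * x + s * y) <= t * exp x + s * exp y.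
Proof.
  intros Ht Hs Hts.
  set (z := t * x + s * y).
  assert (E1 : exp x = exp z * exp (x - z)) by (rewrite <- exp_plus; f_equal; ring).
  assert (E2 : exp y = exp z * exp (y - z)) by (rewrite <- exp_plus; f_equal; ring).
  pose proof (exp_ineq1_le (x - z)). pose proof (exp_ineq1_le (y - z)).
  pose proof (exp_pos z).
  rewrite E1, E2.
  assert (t * (exp z * (1 + (x - z))) + s * (exp z * (1 + (y - z))) = exp z).
  { unfold z. replace s with (1 - t) by lra. ring_simplify.
    unfold z in *. nra. }
  assert (t * (exp z * (1 + (x - z))) <= t * (exp z * exp (x - z))).
  { apply Rmult_le_compat_l; auto. apply Rmult_le_compat_l; lra. }
  assert (s * (exp z * (1 + (y - z))) <= s * (exp z * exp (y - z))).
  { apply Rmult_le_compat_l; auto. apply Rmult_le_compat_l; lra. }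
  lra.
Qed.

Lemma young p q a b : 1 < p -> 0 < q -> / p + / q = 1 -> 0 <= a -> 0 <= b ->
  a * b <= pw a p / p + pw b q / q.
Proof.
  intros Hp Hq Hpq Ha Hb.
  pose proof (pw_ge0 a p). pose proof (pw_ge0 b q).
  assert (0 < /p) by (apply Rinv_0_lt_compat; lra).
  assert (0 < /q) by (apply Rinv_0_lt_compat; lra).
  destruct (Req_dec a 0) as [->|Ha0].
  { assert (0 <= pw 0 p / p) by (unfold Rdiv; apply Rmult_le_pos; lra).
    assert (0 <= pw b q / q) by (unfold Rdiv; apply Rmult_le_pos; lra). nra. }
  destruct (Req_dec b 0) as [->|Hb0].
  { assert (0 <= pw a p / p) by (unfold Rdiv; apply Rmult_le_pos; lra).
    assert (0 <= pw 0 q / q) by (unfold Rdiv; apply Rmult_le_pos; lra). nra. }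
  assert (Ha' : 0 < a) by lra. assert (Hb' : 0 < b) by lra.
  unfold pw. destruct (Rlt_dec 0 a); [|lra]. destruct (Rlt_dec 0 b); [|lra].
  unfold Rpower.
  replace (a * b) with (exp (/p * (p * ln a) + /q * (q * ln b))).
  2:{ replace (/p * (p * ln a) + /q * (q * ln b)) with (ln a + ln b)
        by (field; lra). rewrite exp_plus, !exp_ln; auto. }
  unfold Rdiv. rewrite (Rmult_comm (exp (p * ln a))), (Rmult_comm (exp (q * ln b))).
  apply exp_convex; lra.
Qed.

Lemma pw_div a A r : 0 < A -> pw (a / A) r = pw a r / Rpower A r.
Proof.
  intros HA. unfold pw.
  destruct (Rlt_dec 0 (a / A)) as [H1|H1]; destruct (Rlt_dec 0 a) as [H2|H2].
  - unfold Rpower. unfold Rdiv. rewrite ln_mult, ln_Rinv by (try apply Rinv_0_lt_compat; lra).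
    rewrite Rmult_plus_distr_l, exp_plus. rewrite <- exp_Ropp. f_equal. f_equal. ring.
  - exfalso. apply H2. apply Rlt_gt in H1. unfold Rdiv in H1.
    destruct (Rle_or_lt a 0); auto. assert (a * / A <= 0).
    { assert (0 < / A) by (apply Rinv_0_lt_compat; lra). nra. } lra.
  - exfalso. apply H1. unfold Rdiv. apply Rmult_lt_0_compat; auto. apply Rinv_0_lt_compat; lra.
  - unfold Rdiv; ring.
Qed.

Lemma holder p q (a b : nat -> R) N A B :
  1 < p -> 0 < q -> / p + / q = 1 -> 0 < A -> 0 < B ->
  (forall i, 0 <= a i) -> (forall i, 0 <= b i) ->
  sum_f_R0 (fun i => pw (a i) p) N <= Rpower A p ->
  sum_f_R0 (fun i => pw (b i) q) N <= Rpower B q ->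
  sum_f_R0 (fun i => a i * b i) N <= A * B.
Proof.
  intros Hp Hq Hpq HA HB Ha Hb Sa Sb.
  assert (PA : 0 < Rpower A p) by apply exp_pos.
  assert (PB : 0 < Rpower B q) by apply exp_pos.
  apply Rle_trans with (sum_f_R0 (fun i => (pw (a i) p * (A * B / (p * Rpower A p)))
                                     + (pw (b i) q * (A * B / (q * Rpower B q)))) N).
  - apply sum_Rle. intros i _.
    pose proof (young p q (a i / A) (b i / B) Hp Hq Hpq) as Y.
    rewrite !pw_div in Y by auto.
    assert (Y' : a i / A * (b i / B) <= pw (a i) p / Rpower A p / p + pw (b i) q / Rpower B q / q).
    { apply Y; unfold Rdiv; apply Rmult_le_pos; auto; left; apply Rinv_0_lt_compat; auto. }
    replace (a i * b i) with ((A * B) * (a i / A * (b i / B))) by (field; lra).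
    apply Rle_trans with ((A*B) * (pw (a i) p / Rpower A p / p + pw (b i) q / Rpower B q / q)).
    + apply Rmult_le_compat_l; nra.
    + right. field. lra.
  - rewrite sum_plus, <- !scal_sum.
    assert (0 < A * B) by nra.
    assert (0 < A * B / (p * Rpower A p)) by (apply Rdiv_lt_0_compat; nra).
    assert (0 < A * B / (q * Rpower B q)) by (apply Rdiv_lt_0_compat; nra).
    apply Rle_trans with (A * B / (p * Rpower A p) * Rpower A p + A * B / (q * Rpower B q) * Rpower B q).
    + apply Rplus_le_compat; apply Rmult_le_compat_l; lra.
    + right. replace (A * B) with (A * B * (/p + /q)) at 3 by (rewrite Hpq; ring).
      field. lra.
Qed.

Lemma sum_nonneg_le (g : nat -> R) L M :
  (forall l, 0 <= g l) -> (forall l, (M < l)%nat -> g l = 0) ->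
  sum_f_R0 g L <= sum_f_R0 g M.
Proof.
  intros Hg Hz.
  assert (mono : forall a b, (a <= b)%nat -> sum_f_R0 g a <= sum_f_R0 g b).
  { intros a b Hab. induction Hab. lra. simpl. pose proof (Hg (S m)). lra. }
  induction L.
  - apply mono; lia.
  - destruct (Nat.le_gt_cases (S L) M). apply mono; auto.
    simpl. rewrite Hz by lia. lra.
Qed.

Lemma sum_shift_le (g : nat -> R) j N :
  (forall l, 0 <= g l) -> sum_f_R0 (fun i => g (i + j)%nat) N <= sum_f_R0 g (N + j).
Proof.
  intros Hg. induction N.
  - simpl. destruct j. simpl; lra. simpl.
    assert (0 <= sum_f_R0 g j) by (apply cond_pos_sum; auto). lra.
  - simpl. replace (S (N + j)) with (S N + j)%nat by lia. lra.
Qed.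

Lemma shifted_bound r N j Nn : 0 < r ->
  sum_f_R0 (fun i => pw (INR (bin N (i + j))) r) Nn <=
  sum_f_R0 (fun l => Rpower (C N l) r) N.
Proof.
  intros Hr.
  set (g := fun l => pw (INR (bin N l)) r).
  assert (Hg : forall l, 0 <= g l) by (intros; apply pw_ge0).
  apply Rle_trans with (sum_f_R0 g (Nn + j)).
  { apply (sum_shift_le g j Nn Hg). }
  apply Rle_trans with (sum_f_R0 g N).
  { apply sum_nonneg_le; auto. intros l Hl. unfold g. rewrite bin_big by lia.
    unfold pw. simpl. destruct Rlt_dec; lra. }
  apply sum_Rle. intros l Hl. unfold g. rewrite bin_C by lia. apply pw_le.
Qed.

Lemma norm_facts r N : 0 < r ->
  0 < binom_norm r N /\
  Rpower (binom_norm r N) r = sum_f_R0 (fun l => Rpower (C N l) r) N.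
Proof.
  intros Hr. split.
  - apply exp_pos.
  - unfold binom_norm. rewrite Rpower_mult. rewrite Rinv_l by lra.
    apply Rpower_1. apply tech1. intros; apply exp_pos.
Qed.

Lemma key p q n m k : 1 < p -> / p + / q = 1 -> (k <= n + m)%nat ->
  C (n + m) k <= binom_norm p m * binom_norm q n.
Proof.
  intros Hp Hpq Hk.
  assert (Hq : 0 < q).
  { assert (0 < / p < 1).
    { split. apply Rinv_0_lt_compat; lra. rewrite <- Rinv_1. apply Rinv_lt_contravar; lra. }
    destruct (Rtotal_order q 0) as [H0|[H0|H0]]; auto.
    - pose proof (Rinv_lt_0_compat q H0). lra.
    - subst. rewrite Rinv_0 in Hpq. lra. }
  destruct (norm_facts p m) as [HA EA]; [lra|].
  destruct (norm_facts q n) as [HB EB]; [lra|].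
  destruct (Nat.le_gt_cases m k) as [Hmk|Hmk].
  - set (j := (k - m)%nat).
    assert (E : C (n + m) k =
      sum_f_R0 (fun i => INR (bin m (i + 0)) * INR (bin n (i + j))) m).
    { rewrite (sum_eq _ (fun i => INR (bin m i) * INR (bin n (i + j)))).
      2:{ intros i _. rewrite Nat.add_0_r. reflexivity. }
      rewrite vander. rewrite bin_C by lia. f_equal; lia. }
    rewrite E.
    apply (holder p q (fun i => INR (bin m (i + 0))) (fun i => INR (bin n (i + j)))); auto;
      try (intros; apply pos_INR).
    + rewrite EA. apply shifted_bound. lra.
    + rewrite EB. apply shifted_bound. lra.
  - set (j := (m - k)%nat).
    assert (E : C (n + m) k =
      sum_f_R0 (fun i => INR (bin m (i + j)) * INR (bin n (i + 0))) n).
    { rewrite (sum_eq _ (fun i => INR (bin n i) * INR (bin m (i + j)))).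
      2:{ intros i _. rewrite Nat.add_0_r. ring. }
      rewrite vander. rewrite bin_C by lia.
      rewrite (pascal_step1 (n + m) k) by lia. f_equal; lia. }
    rewrite E.
    apply (holder p q (fun i => INR (bin m (i + j))) (fun i => INR (bin n (i + 0)))); auto;
      try (intros; apply pos_INR).
    + rewrite EA. apply shifted_bound. lra.
    + rewrite EB. apply shifted_bound. lra.
Qed.

Theorem mainTheorem7 (p q : R) (n m : nat) :
  1 < p -> / p + / q = 1 ->
  (Nat.even (n + m) = true ->
     C (n + m) ((n + m) / 2) <= binom_norm p m * binom_norm q n) /\
  (Nat.even (n + m) = false ->
     / 2 * C (n + m + 1) ((n + m + 1) / 2) <= binom_norm p m * binom_norm q n).
Proof.
  intros Hp Hpq. split.
  - intros _. apply key; auto. apply Nat.div_le_upper_bound; lia.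
  - intros Hev.
    destruct (Nat.Even_or_Odd (n + m)) as [He|[t Ht]].
    { apply Nat.even_spec in He. congruence. }
    assert (Hk : ((n + m + 1) / 2 = S t)%nat).
    { rewrite Ht. replace (2 * t + 1 + 1)%nat with (S t * 2)%nat by lia.
      apply Nat.div_mul. lia. }
    rewrite Hk. replace (n + m + 1)%nat with (S (n + m)) by lia.
    rewrite <- pascal by lia.
    pose proof (key p q n m t Hp Hpq ltac:(lia)).
    pose proof (key p q n m (S t) Hp Hpq ltac:(lia)).
    lra.
Qed.
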